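(* Let $n=n_1+\dots+n_k=p+q$ with positive integers, let $G=U(n)$, let $L=U(n_1)\times\cdots\times U(n_k)$ and $H=U(p)\times U(q)$ be the natural block-diagonal subgroups of $G$, and let $G'=O(n)$. If $\min(p,q)=2$ and $k\ge 4$, then $LG'H\subsetneq G$.
   Context: $LG'H=\{xyz:x\in L,y\in G',z\in H\}$. *)

(* Defs.v *)
From HB Require Import structures.
From mathcomp Require Import all_boot all_order all_algebra.
From mathcomp Require Import complex.
From mathcomp Require Import reals.
Set Implicit Arguments. Unset Strict Implicit. Unset Printing Implicit Defensive.
Import Order.TTheory GRing.Theory Num.Theory.
Local Open Scope ring_scope.

Definition adjmx (R : rcfType) (n : nat) (A : 'M[R[i]]_n) : 'M[R[i]]_n :=
  (map_mx (@conjc R) A)^T.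

Definition unitary (R : rcfType) (n : nat) (A : 'M[R[i]]_n) : Prop :=
  A *m adjmx A = 1%:M.

(* O(n), viewed inside U(n): real entries and unitary (= orthogonal) *)
Definition orthogonal (R : rcfType) (n : nat) (A : 'M[R[i]]_n) : Prop :=
  (exists B : 'M[R]_n, A = map_mx (fun x : R => (x%:C)%C) B) /\ unitary A.

(* For a composition ns = [:: n_1; ...; n_k] of n, blk ns i is the index
   (0-based) of the consecutive block {n_1+...+n_b, ..., n_1+...+n_{b+1}-1}
   containing i. *)
Definition blk (ns : seq nat) (i : nat) : nat :=
  count (fun b => sumn (take b.+1 ns) <= i)%N (iota 0 (size ns)).

Definition block_diag (R : rcfType) (n : nat) (ns : seq nat)
  (A : 'M[R[i]]_n) : Prop :=
  forall i j : 'I_n, blk ns i <> blk ns j -> A i j = 0.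

(* U(n_1) x ... x U(n_k) embedded block-diagonally in U(n) *)
Definition blockU (R : rcfType) (n : nat) (ns : seq nat)
  (A : 'M[R[i]]_n) : Prop := unitary A /\ block_diag ns A.

Definition LGH_set (R : rcfType) (n : nat) (ns : seq nat) (p q : nat)
  (g : 'M[R[i]]_n) : Prop :=
  exists l o h : 'M[R[i]]_n,
    [/\ blockU ns l, orthogonal o, blockU [:: p; q] h & g = l *m o *m h].

(* Main.v *)
Require Import Defs.
From HB Require Import structures.
From mathcomp Require Import all_boot all_order all_algebra all_fingroup.
From mathcomp Require Import complex.
From mathcomp Require Import reals.
From mathcomp Require Import ring lra zify.
Import Order.TTheory GRing.Theory Num.Theory.
Set Implicit Arguments. Unset Strict Implicit. Unset Printing Implicit Defensive.
Local Open Scope ring_scope.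

Section Gen.
Variable R : rcfType.
Local Notation C := (R[i]).
Local Notation cj := (map_mx (@conjc R)).

Lemma cjK n m (A : 'M[C]_(n,m)) : cj (cj A) = A.
Proof. by apply/matrixP => i j; rewrite !mxE conjcK. Qed.

Lemma adjmx_mul n (A B : 'M[C]_n) : adjmx (A *m B) = adjmx B *m adjmx A.
Proof. by rewrite /adjmx map_mxM trmx_mul. Qed.

Lemma adjmxK n (A : 'M[C]_n) : adjmx (adjmx A) = A.
Proof. by apply/matrixP => i j; rewrite !mxE conjcK. Qed.

Lemma cj_adj n (A : 'M[C]_n) : cj (adjmx A) = A^T.
Proof. by apply/matrixP => i j; rewrite !mxE conjcK. Qed.

Lemma unitaryC n (A : 'M[C]_n) : unitary A -> adjmx A *m A = 1%:M.
Proof. by move=> /mulmx1C. Qed.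

Lemma unitary_mul n (A B : 'M[C]_n) : unitary A -> unitary B -> unitary (A *m B).
Proof.
rewrite /unitary => hA hB; rewrite adjmx_mul mulmxA -(mulmxA A) hB mulmx1 hA //.
Qed.

Lemma cj_perm n (s : {perm 'I_n}) : cj (perm_mx s : 'M[C]_n) = perm_mx s.
Proof. by apply/matrixP => i j; rewrite !mxE conjc_nat. Qed.

Lemma adj_perm n (s : {perm 'I_n}) : adjmx (perm_mx s : 'M[C]_n) = (perm_mx s)^T.
Proof. by rewrite /adjmx cj_perm. Qed.

Lemma perm_orth n (s : {perm 'I_n}) : (perm_mx s : 'M[C]_n) *m (perm_mx s)^T = 1%:M.
Proof. by rewrite tr_perm_mx -perm_mxM mulgV perm_mx1. Qed.

Lemma perm_orth' n (s : {perm 'I_n}) : ((perm_mx s)^T : 'M[C]_n) *m (perm_mx s) = 1%:M.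
Proof. by rewrite tr_perm_mx -perm_mxM mulVg perm_mx1. Qed.

Lemma unitary_perm n (s : {perm 'I_n}) : unitary (perm_mx s : 'M[C]_n).
Proof. by rewrite /unitary adj_perm perm_orth. Qed.

Lemma unitary_trperm n (s : {perm 'I_n}) : unitary ((perm_mx s)^T : 'M[C]_n).
Proof.
rewrite /unitary; have -> : adjmx ((perm_mx s)^T) = (perm_mx s : 'M[C]_n).
  by apply/matrixP => i j; rewrite !mxE conjc_nat.
exact: perm_orth'.
Qed.

Lemma bd_mul n ns (A B : 'M[C]_n) : block_diag ns A -> block_diag ns B ->
  block_diag ns (A *m B).
Proof.
move=> hA hB i j hij; rewrite mxE big1 // => k _.
have [e|ne] := eqVneq (blk ns i) (blk ns k).
  by rewrite hB ?mulr0 // -e.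
by rewrite hA ?mul0r //; apply/eqP.
Qed.

Lemma bd_tr n ns (A : 'M[C]_n) : block_diag ns A -> block_diag ns A^T.
Proof. by move=> hA i j hij; rewrite mxE hA // => e; apply: hij. Qed.

Lemma bd_cj n ns (A : 'M[C]_n) : block_diag ns A -> block_diag ns (cj A).
Proof. by move=> hA i j hij; rewrite mxE hA // conjc0. Qed.

Lemma bd_adj n ns (A : 'M[C]_n) : block_diag ns A -> block_diag ns (adjmx A).
Proof. by move=> hA; apply/bd_tr/bd_cj. Qed.

Lemma real_cj n (B : 'M[R]_n) :
  cj (map_mx (fun x : R => (x%:C)%C) B) = map_mx (fun x : R => (x%:C)%C) B.
Proof. by apply/matrixP => i j; rewrite !mxE conjc_real. Qed.

End Gen.

Local Close Scope ring_scope.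

Lemma blk_cons x ns i :
  blk (x :: ns) i = if (x <= i)%N then (blk ns (i - x)).+1 else 0%N.
Proof.
rewrite /blk /= (iotaDl 1 0) count_map take0 addn0.
case: ifP => hx.
  rewrite add1n; congr (_.+1); apply: eq_count => b /=.
  by rewrite add1n /= leq_subRL.
rewrite add0n; apply/eqP; rewrite -leqn0 leqNgt -has_count; apply/hasPn => b _ /=.
by rewrite add1n /=; apply/negP => h; move: hx; rewrite (leq_trans (leq_addr _ _) h).
Qed.

Lemma inord_neq N k l : (k < N.+1)%N -> (l < N.+1)%N -> k <> l -> @inord N k != inord l.
Proof. by move=> hk hl hkl; apply/eqP => /(congr1 val); rewrite /= !inordK. Qed.

Definition oo m k : 'I_(4 + m) := @inord (3 + m) k.

Lemma tpD m k l x : (k < 4 + m)%N -> (l < 4 + m)%N -> (x < 4 + m)%N ->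
  x <> k -> x <> l -> tperm (oo m k) (oo m l) (oo m x) = oo m x.
Proof. by move=> hk hl hx h1 h2; rewrite tpermD // eq_sym inord_neq. Qed.

Lemma tpL m k l : tperm (oo m k) (oo m l) (oo m k) = oo m l.
Proof. exact: tpermL. Qed.

Lemma ooK m k : (k < 4 + m)%N -> val (oo m k) = k.
Proof. by move=> hk; rewrite /= inordK. Qed.

Lemma rows_perm m n0 n1 n2 n3 rest :
  (0 < n0)%N -> (0 < n1)%N -> (0 < n2)%N -> (0 < n3)%N ->
  (n0 + (n1 + (n2 + (n3 + sumn rest))))%N = (4 + m)%N ->
  exists s : {perm 'I_(4 + m)}, forall a : 'I_(4 + m), (a < 4)%N ->
    blk [:: n0, n1, n2, n3 & rest] (s a) = a.
Proof.
move=> h0 h1 h2 h3 hs.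
exists (tperm (oo m 3) (oo m (n0 + n1 + n2)) * tperm (oo m 2) (oo m (n0 + n1))
         * tperm (oo m 1) (oo m n0))%g => a ha.
rewrite -(inord_val a); move: (val a) ha => k hk.
rewrite -/(oo m k) [in RHS]ooK; last lia.
move: hk; case: k => [|[|[|[|k]]]] // _; rewrite !permM.
- rewrite (@tpD m 3 (n0 + n1 + n2) 0); try lia.
  rewrite (@tpD m 2 (n0 + n1) 0); try lia.
  rewrite (@tpD m 1 n0 0); try lia.
  rewrite ooK; last lia.
  by rewrite blk_cons leqNgt h0.
- rewrite (@tpD m 3 (n0 + n1 + n2) 1); try lia.
  rewrite (@tpD m 2 (n0 + n1) 1); try lia.
  rewrite tpL ooK; last lia.
  by rewrite blk_cons leqnn subnn blk_cons leqNgt h1.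
- rewrite (@tpD m 3 (n0 + n1 + n2) 2); try lia.
  rewrite tpL (@tpD m 1 n0 (n0 + n1)); try lia.
  rewrite ooK; last lia.
  by rewrite blk_cons leq_addr addKn blk_cons leqnn subnn blk_cons leqNgt h2.
- rewrite tpL (@tpD m 2 (n0 + n1) (n0 + n1 + n2)); try lia.
  rewrite (@tpD m 1 n0 (n0 + n1 + n2)); try lia.
  rewrite ooK; last lia.
  rewrite blk_cons -addnA leq_addr addKn blk_cons leq_addr addKn.
  by rewrite blk_cons leqnn subnn blk_cons leqNgt h3.
Qed.

Lemma blk2 p q i : (i < p + q)%N -> blk [:: p; q] i = (p <= i)%N.
Proof.
move=> hi; rewrite blk_cons; case: ifP => // hp.
by rewrite blk_cons ifN //; rewrite -ltnNge; lia.
Qed.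

Lemma cols_perm m p q : (p + q)%N = (4 + m)%N -> minn p q = 2%N ->
  exists u : {perm 'I_(4 + m)}, forall x y : 'I_(4 + m), (x < 2)%N ->
    (blk [:: p; q] (u y) == blk [:: p; q] (u x)) = (y < 2)%N.
Proof.
move=> hpq hmin.
have [hp|hq] : p = 2%N \/ q = 2%N by lia.
  exists 1%g => x y hx; rewrite !perm1 !blk2 ?hpq // hp.
  by case: (ltnP y 2); case: (ltnP x 2) hx => //.
exists (perm (@rev_ord_inj (4 + m))) => x y hx.
rewrite !permE !blk2 ?hpq //= .
have -> : p = (m + 2)%N by lia.
case: (ltnP y 2) => hy; case: (leqP (m + 2) (4 + m - y.+1)) => h1;
  case: (leqP (m + 2) (4 + m - x.+1)) => h2 //; try (exfalso; lia).
all: lia.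
Qed.

Local Open Scope ring_scope.

Section Core.
Variable R : rcfType.
Local Notation C := (R[i]).
Local Notation cj := (map_mx (@conjc R)).
Local Open Scope complex_scope.

Definition g0 (i j : nat) : C :=
  match i, j with
  | 0, 0 => 0 +i* 0 | 0, 1 => 1 +i* 0 | 0, 2 => 1 +i* 1 | 0, 3 => 1 +i* 0
  | 1, 0 => 1 +i* 1 | 1, 1 => 1 +i* 0 | 1, 2 => 0 +i* 0 | 1, 3 => (-1) +i* 0
  | 2, 0 => 1 +i* 0 | 2, 1 => 0 +i* 1 | 2, 2 => 0 +i* (-1) | 2, 3 => 1 +i* 0
  | 3, 0 => 1 +i* 0 | 3, 1 => (-1) +i* 0 | 3, 2 => 0 +i* 1 | _, _ => 0 +i* (-1)
  end.

Definition M0 : 'M[C]_4 := \matrix_(i < 4, j < 4) g0 i j.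

Definition o0 : 'I_4 := @Ordinal 4 0 isT.
Definition o1 : 'I_4 := @Ordinal 4 1 isT.
Definition o2 : 'I_4 := @Ordinal 4 2 isT.
Definition o3 : 'I_4 := @Ordinal 4 3 isT.

Lemma sum4 (F : 'I_4 -> C) : \sum_(a < 4) F a = F o0 + F o1 + F o2 + F o3.
Proof.
rewrite !big_ord_recr big_ord0 /=.
rewrite GRing.add0r; congr (_ + _ + _ + _); congr F; exact: val_inj.
Qed.

Lemma M0_unitary : M0 *m adjmx M0 = 4%:M.
Proof.
apply/matrixP => i j; rewrite !mxE sum4 /adjmx !mxE.
case: i => [[|[|[|[|i]]]] Hi] //; case: j => [[|[|[|[|j]]]] Hj] //=;
  apply/eqP; rewrite eq_complex /=; apply/andP; split; apply/eqP; ring.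
Qed.


Lemma keyM0 (d : 'rV[C]_4) :
  (forall x y : 'I_4, (x < 2)%N -> (2 <= y)%N ->
     (adjmx M0 *m diag_mx d *m cj M0) x y = 0) -> d = 0.
Proof.
move=> h.
have E02 := h o0 o2 isT isT; have E03 := h o0 o3 isT isT.
have E12 := h o1 o2 isT isT; have E13 := h o1 o3 isT isT.
move: E02 E03 E12 E13; rewrite mul_mx_diag /adjmx !mxE !sum4 !mxE /=.
have : d = \row_k (d 0 k) by apply/rowP => k; rewrite mxE.
move=> ->; rewrite (_ : (\row_k d 0 k) = \row_k (if k == o0 then d 0 o0 else if k == o1 then d 0 o1
   else if k == o2 then d 0 o2 else d 0 o3)); last first.
  apply/rowP => k; rewrite !mxE; case: k => [[|[|[|[|k]]]] Hk] //=; congr (d 0 _); exact: val_inj.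
rewrite !mxE.
case: (d 0 o0) => x0 y0; case: (d 0 o1) => x1 y1; case: (d 0 o2) => x2 y2; case: (d 0 o3) => x3 y3.
move=> /eqP; rewrite eq_complex /= => /andP[/eqP a1 /eqP b1].
move=> /eqP; rewrite eq_complex /= => /andP[/eqP a2 /eqP b2].
move=> /eqP; rewrite eq_complex /= => /andP[/eqP a3 /eqP b3].
move=> /eqP; rewrite eq_complex /= => /andP[/eqP a4 /eqP b4].
apply/rowP => k; rewrite !mxE; case: k => [[|[|[|[|k]]]] Hk] //=;
  apply/eqP; rewrite eq_complex /=; apply/andP; split; apply/eqP; lra.
Qed.
End Core.

Section Main.
Variable R : rcfType.
Local Notation C := (R[i]).
Local Notation cj := (map_mx (@conjc R)).

Lemma adj_scale n (a : C) (A : 'M[C]_n) : adjmx (a *: A) = (conjc a) *: adjmx A.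
Proof. by apply/matrixP => i j; rewrite !mxE rmorphM. Qed.

Lemma cj_scale n (a : C) (A : 'M[C]_n) : cj (a *: A) = (conjc a) *: cj A.
Proof. by apply/matrixP => i j; rewrite !mxE rmorphM. Qed.

Lemma conj_half : conjc (2^-1 : C) = 2^-1.
Proof. by rewrite conjc_inv conjc_nat. Qed.

Lemma two_neq0 : (2 : C) != 0.
Proof. by rewrite pnatr_eq0. Qed.

Definition G : 'M[C]_4 := 2^-1 *: M0 R.

Lemma adjG : adjmx G = 2^-1 *: adjmx (M0 R).
Proof. by rewrite /G adj_scale conj_half. Qed.

Lemma cjG : cj G = 2^-1 *: cj (M0 R).
Proof. by rewrite /G cj_scale conj_half. Qed.

Lemma G_unitary : G *m adjmx G = 1%:M.
Proof.
rewrite adjG /G -scalemxAl -scalemxAr M0_unitary !scalerA scale_scalar_mx.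
congr (_%:M); rewrite (_ : (4 : C) = 2 * 2); last by rewrite -natrM.
have := two_neq0; move: (2 : C) => t ht.
by field.
Qed.

Definition Dm m : 'M[C]_(4 + m) := block_mx G 0 0 1%:M.

Lemma adjD m : adjmx (Dm m) = block_mx (adjmx G) 0 0 1%:M.
Proof.
rewrite /Dm /adjmx map_block_mx tr_block_mx.
congr block_mx; apply/matrixP => i j; rewrite !mxE ?conjc0 //.
by rewrite conjc_nat eq_sym.
Qed.

Lemma cjD m : cj (Dm m) = block_mx (cj G) 0 0 1%:M.
Proof.
rewrite /Dm map_block_mx.
congr block_mx; apply/matrixP => i j; rewrite !mxE ?conjc0 //.
by rewrite conjc_nat.
Qed.

Lemma D_unitary m : unitary (Dm m).
Proof.
rewrite /unitary adjD /Dm mulmx_block !mulmx0 !mul0mx !mulmx1 !addr0 !add0r G_unitary.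
by rewrite [RHS]scalar_mx_block.
Qed.

End Main.

Section Main2.
Variable R : rcfType.
Local Notation C := (R[i]).
Local Notation cj := (map_mx (@conjc R)).

Lemma cj_mul n (A B : 'M[C]_n) : cj (A *m B) = cj A *m cj B.
Proof. by apply/matrixP => i j; rewrite !mxE rmorph_sum; apply: eq_bigr => k _; rewrite rmorphM !mxE. Qed.

Lemma cj1 n : cj (1%:M : 'M[C]_n) = 1%:M.
Proof. by apply/matrixP => i j; rewrite !mxE conjc_nat. Qed.

Lemma cjtr n (A : 'M[C]_n) : cj A^T = (cj A)^T.
Proof. by apply/matrixP => i j; rewrite !mxE. Qed.

Lemma adj_tr n (A : 'M[C]_n) : (adjmx A)^T = cj A.
Proof. by rewrite /adjmx trmxK. Qed.

Lemma adj_cj n (A : 'M[C]_n) : adjmx (cj A) = A^T.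
Proof. by rewrite /adjmx cjK. Qed.

Lemma hbar n (h : 'M[C]_n) : unitary h -> cj h *m h^T = 1%:M.
Proof. by move=> uh; rewrite -cj_adj -cj_mul uh cj1. Qed.

Lemma rowpermE n (s : {perm 'I_n}) (A : 'M[C]_n) i j :
  (perm_mx s *m A *m (perm_mx s)^T) i j = A (s i) (s j).
Proof. by rewrite -row_permE tr_perm_mx -col_permE !mxE. Qed.

Lemma nogo m ns p q (s u : {perm 'I_(4 + m)}) (T S : 'M[C]_(4 + m)) :
  (forall a : 'I_(4 + m), (a < 4)%N -> blk ns (s a) = a) ->
  (forall x y : 'I_(4 + m), (x < 2)%N ->
    (blk [:: p; q] (u y) == blk [:: p; q] (u x)) = (y < 2)%N) ->
  block_diag ns T -> block_diag [:: p; q] S -> unitary S ->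
  perm_mx u *m S *m (perm_mx u)^T =
    adjmx (Dm R m) *m (perm_mx s *m T *m (perm_mx s)^T) *m cj (Dm R m) ->
  False.
Proof.
move=> hs hu bT bS uS eX.
set T' := perm_mx s *m T *m (perm_mx s)^T in eX.
have eT' : forall a b, T' a b = T (s a) (s b) by move=> a b; rewrite rowpermE.
clearbody T'.
set Y := adjmx (Dm R m) *m T' *m cj (Dm R m) in eX.
pose ul := adjmx (G R) *m ulsubmx T' *m cj (G R).
have eY : forall x y : 'I_4, Y (lshift m x) (lshift m y) = ul x y.
  move=> x y; rewrite /Y /ul adjD cjD -[T']submxK.
  rewrite !mulmx_block !mulmx0 !mul0mx !mulmx1 !mul1mx !addr0 !add0r.
  by rewrite block_mxEul submxK.
have eS : forall x y, S (u x) (u y) = Y x y by move=> x y; rewrite -eX rowpermE.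
pose d := \row_(a < 4) ulsubmx T' a a.
have ed : ulsubmx T' = diag_mx d.
  apply/matrixP => a b; rewrite [RHS]mxE [d 0 a]mxE.
  have [<-|nab] := eqVneq a b; first by rewrite mulr1n.
  rewrite mulr0n (_ : ulsubmx T' a b = T' (lshift m a) (lshift m b)); last by rewrite !mxE.
  rewrite eT' bT //.
  rewrite !hs /= ?ltn_ord //; move=> /val_inj; exact/eqP.
have d0 : d = 0.
  apply: (keyM0 (R:=R)) => x y hx hy.
  have := eS (lshift m x) (lshift m y); rewrite eY /ul ed adjG cjG.
  rewrite -scalemxAl -scalemxAr -scalemxAl !mxE.
  rewrite bS; last first.
    by apply/eqP; rewrite eq_sym hu //= -leqNgt.
  move/esym/eqP; rewrite !mulf_eq0 invr_eq0 (negbTE (two_neq0 R)) /=.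
  by move/eqP.
have row0 : forall j, S (u (lshift m o0)) j = 0.
  move=> j; rewrite -(permKV u j); set y := u^-1%g j.
  case: (ltnP y 2) => hy.
    have -> : y = lshift m (@Ordinal 4 y (@ltn_trans 2 _ 4 hy isT)) by apply: val_inj.
    have z : diag_mx (0 : 'rV[C]_4) = 0 by apply/matrixP => a b; rewrite !mxE mul0rn.
    by rewrite eS eY /ul ed d0 z mulmx0 mul0mx mxE.
  rewrite bS //; apply/eqP; by rewrite eq_sym hu //= -leqNgt.
move: uS; rewrite /unitary => /matrixP /(_ (u (lshift m o0)) (u (lshift m o0))).
rewrite !mxE big1 ?eqxx //= => [/eqP|j _]; last by rewrite row0 mul0r.
by rewrite eq_sym oner_eq0.
Qed.

End Main2.

Section Main3.
Variable R : rcfType.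
Local Notation C := (R[i]).
Local Notation cj := (map_mx (@conjc R)).

Lemma claim1 n (l o h : 'M[C]_n) : unitary h -> cj o = o -> unitary o ->
  (l *m o *m h) *m (adjmx h *m cj h) *m (l *m o *m h)^T = l *m l^T.
Proof.
move=> uh co uo; rewrite !trmx_mul !mulmxA.
rewrite -(mulmxA (l *m o) h) uh mulmx1 -(mulmxA (l *m o)) hbar // mulmx1.
have oo : o *m o^T = 1%:M by move: uo; rewrite /unitary /adjmx co.
by rewrite -(mulmxA l) oo mulmx1.
Qed.

Lemma claim2 n (g S T : 'M[C]_n) : unitary g -> g *m S *m g^T = T ->
  S = adjmx g *m T *m cj g.
Proof.
move=> ug <-; rewrite !mulmxA (unitaryC ug) mul1mx -mulmxA.
by rewrite -adj_tr -trmx_mul (unitaryC ug) trmx1 mulmx1.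
Qed.

Lemma adj_trperm n (s : {perm 'I_n}) : adjmx ((perm_mx s)^T : 'M[C]_n) = perm_mx s.
Proof. by apply/matrixP => i j; rewrite !mxE conjc_nat. Qed.

Lemma claim3 n (s u : {perm 'I_n}) (D T : 'M[C]_n) :
  let g := (perm_mx s)^T *m D *m perm_mx u in
  perm_mx u *m (adjmx g *m T *m cj g) *m (perm_mx u)^T =
  adjmx D *m (perm_mx s *m T *m (perm_mx s)^T) *m cj D.
Proof.
move=> g; rewrite /g !adjmx_mul !cj_mul adj_trperm adj_perm cjtr !cj_perm.
rewrite !mulmxA perm_orth mul1mx -mulmxA perm_orth mulmx1.
by rewrite ?mulmxA.
Qed.

End Main3.

Unset Implicit Arguments.
Set Strict Implicit.

Theorem proposition6p6 (R : realType) (n : nat) (ns : seq nat) (p q : nat) :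
  all (fun m => 0 < m)%N ns -> sumn ns = n ->
  (0 < p)%N -> (0 < q)%N -> (p + q)%N = n ->
  minn p q = 2%N -> (4 <= size ns)%N ->
  (forall g : 'M[R[i]]_n, LGH_set ns p q g -> unitary g) /\
  (exists g : 'M[R[i]]_n, unitary g /\ ~ LGH_set ns p q g).
Proof.
move=> hall hsum hp hq hpq hmin hsize; split.
  move=> g [l [o [h [[ul _] [_ uo] [uh _] ->]]]].
  exact: unitary_mul (unitary_mul ul uo) uh.
case: ns hall hsum hsize => [|n0 [|n1 [|n2 [|n3 rest]]]] //= hall hsum _.
move: hall => /and5P [h0 h1 h2 h3 _].
have [m hm] : exists m, n = (4 + m)%N by exists (n - 4)%N; lia.
move: hpq hsum; subst n => hpq hsum.
have [s hs] := rows_perm h0 h1 h2 h3 hsum.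
have [u hu] := cols_perm hpq hmin.
pose g := (perm_mx s)^T *m Dm R m *m perm_mx u.
have ug : unitary g.
  apply: unitary_mul; last exact: unitary_perm.
  apply: unitary_mul; [exact: unitary_trperm | exact: D_unitary].
exists g; split => //.
move=> [l [o [h [[ul bl] [[B oB] uo] [uh bh] eg]]]].
have co : map_mx (@conjc R) o = o by rewrite oB real_cj.
have e1 := claim1 l uh co uo; rewrite -eg in e1.
have eS := claim2 ug e1.
apply: (nogo hs hu (T := l *m l^T) (S := adjmx h *m map_mx (@conjc R) h)).
- exact: bd_mul bl (bd_tr bl).
- exact: bd_mul (bd_adj bh) (bd_cj bh).
- rewrite /unitary adjmx_mul adj_cj adjmxK mulmxA -(mulmxA (adjmx h)) hbar //.
  by rewrite mulmx1 unitaryC.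
- by rewrite {1}eS claim3.
Qed.
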